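(* Let $G_1=(V_1,E_1)$ and $G_2=(V_2,E_2)$ be finite, simple, connected graphs. The following are equivalent: (i) $G_1$ and $G_2$ are reflective; (ii) the cartesian product $G_1\times G_2$ is reflective.
   Context: $d$ is the combinatorial distance. For adjacent $x\sim y$ in a graph with vertex set $V$ let $V_x^y=\{v: d(v,x)<d(v,y)\}$, $V^{xy}=\{v:d(v,x)=d(v,y)\}$. A reflection from $x$ to $y$ is a graph automorphism $\phi$ with $\phi\circ\phi=\mathrm{id}$, $\phi(x)=y$, such that the edges between $V_x^y$ and $V_y^x$ are exactly $\{\{x',\phi(x')\}:x'\in V_x^y\}$ and $\phi$ fixes $V^{xy}$ pointwise. A graph is reflective if every edge admits a reflection. Cartesian product: vertex set $V_1\times V_2$, $(a,b)\sim(a',b')$ iff ($a=a'$, $b\sim b'$) or ($a\sim a'$, $b=b'$). *)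

(* Defs.v *)
From mathcomp Require Import all_boot.
Set Implicit Arguments. Unset Strict Implicit. Unset Printing Implicit Defensive.

Section Graphs.
Variable T : finType.
Variable e : rel T.

Definition simple_graph : Prop := symmetric e /\ irreflexive e.

Definition connected_graph : Prop := forall x y : T, connect e x y.

Fixpoint walkn (n : nat) (x y : T) : bool :=
  match n with
  | 0 => x == y
  | n'.+1 => [exists z, e x z && walkn n' z y]
  end.

(* combinatorial distance: least n with a walk of length n from x to y
   (any shortest walk has length < #|T|; value #|T| if unreachable,
   which never happens in a connected graph). *)
Definition gdist (x y : T) : nat :=
  find (fun n => walkn n x y) (iota 0 #|T|).

Definition Vside (x y : T) : pred T := fun v => gdist v x < gdist v y.
Definition Vmid (x y : T) : pred T := fun v => gdist v x == gdist v y.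

Definition automorphism (phi : T -> T) : Prop :=
  bijective phi /\ forall a b, e (phi a) (phi b) = e a b.

Definition reflection (x y : T) (phi : T -> T) : Prop :=
  [/\ automorphism phi /\ (forall v, phi (phi v) = v),
      phi x = y,
      (* the edges between V_x^y and V_y^x are exactly {x', phi x'}, x' in V_x^y *)
      (forall a, Vside x y a -> Vside y x (phi a) /\ e a (phi a)),
      (forall a b, Vside x y a -> Vside y x b -> e a b -> b = phi a)
    & forall v, Vmid x y v -> phi v = v].

Definition reflective : Prop :=
  forall x y, e x y -> exists phi, reflection x y phi.

End Graphs.

Definition cart_rel (T1 T2 : finType) (e1 : rel T1) (e2 : rel T2)
  : rel (T1 * T2)%type :=
  fun u v => ((u.1 == v.1) && e2 u.2 v.2) || (e1 u.1 v.1 && (u.2 == v.2)).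

(* Main.v *)
Require Import Defs.
From mathcomp Require Import all_boot.
Set Implicit Arguments. Unset Strict Implicit. Unset Printing Implicit Defensive.

Lemma walkn_path (T : finType) (e : rel T) n x y :
  walkn e n x y <-> exists p, [/\ path e x p, last x p = y & size p = n].
Proof.
elim: n x => [|n IH] x /=.
  split; first by move/eqP=> ->; exists [::].
  by case=> [[|z p]] [_ /= lp sp] //; rewrite lp.
split.
  case/existsP=> z /andP[exz /IH [p [pp lp sp]]].
  by exists (z :: p); rewrite /= exz pp lp sp.
case=> [[|z p]] [//= /andP[exz pp] lp [sp]].
apply/existsP; exists z; rewrite exz /=; apply/IH; by exists p.
Qed.

Lemma walkn_short (T : finType) (e : rel T) n x y :
  walkn e n x y -> exists m, [/\ m < #|T|, m <= n & walkn e m x y].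
Proof.
case/walkn_path=> p [pp lp sp].
rewrite -lp; case: (shortenP pp) => p' pp' up' sub'.
exists (size p'); split.
  by have := max_card (mem (x :: p')); rewrite (card_uniqP up').
- rewrite -sp; apply: uniq_leq_size; first by case/andP: up'.
  exact: sub'.
- apply/walkn_path; exists p'; split => //.
Qed.

Lemma gdist_spec (T : finType) (e : rel T) n x y :
  walkn e n x y -> gdist e x y <= n /\ walkn e (gdist e x y) x y.
Proof.
case/walkn_short=> m [mT mn wm].
have hh : has (fun k => walkn e k x y) (iota 0 #|T|).
  by apply/hasP; exists m => //; rewrite mem_iota.
have fl : gdist e x y < #|T| by rewrite /gdist -[X in _ < X](size_iota 0) -has_find.
split.
  apply: leq_trans mn; rewrite leqNgt; apply/negP => /(before_find 0).
  by rewrite nth_iota // wm.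
have := nth_find 0 hh; rewrite nth_iota //.
Qed.

Lemma conn_walk (T : finType) (e : rel T) x y :
  connected_graph e -> walkn e (gdist e x y) x y.
Proof.
move=> /(_ x y) /connectP [p pp lp].
have : walkn e (size p) x y by apply/walkn_path; exists p.
by case/gdist_spec.
Qed.

Lemma gdist_eq (T : finType) (e : rel T) n x y :
  walkn e n x y -> (forall m, walkn e m x y -> n <= m) -> gdist e x y = n.
Proof.
move=> w H; case: (gdist_spec w) => le w'.
by apply/eqP; rewrite eqn_leq le H.
Qed.

Lemma walkn_iso (T T' : finType) (e : rel T) (e' : rel T') (f : T -> T') (g : T' -> T) :
  cancel f g -> cancel g f -> (forall u v, e' (f u) (f v) = e u v) ->
  forall n u v, walkn e' n (f u) (f v) = walkn e n u v.
Proof.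
move=> fK gK fe; elim=> [|n IH] u v /=; first exact: (inj_eq (can_inj fK)).
apply/existsP/existsP => [[z /andP[h1 h2]]|[z /andP[h1 h2]]].
  by exists (g z); rewrite -fe -IH gK h1 h2.
by exists (f z); rewrite fe IH h1 h2.
Qed.

Lemma gdist_iso (T T' : finType) (e : rel T) (e' : rel T') (f : T -> T') (g : T' -> T) :
  cancel f g -> cancel g f -> (forall u v, e' (f u) (f v) = e u v) ->
  forall u v, gdist e' (f u) (f v) = gdist e u v.
Proof.
move=> fK gK fe u v; rewrite /gdist.
have -> : #|T'| = #|T|.
  by apply/esym/bij_eq_card; exists g.
by apply: eq_find => n; rewrite (walkn_iso fK gK fe).
Qed.

Lemma reflection_iso (T T' : finType) (e : rel T) (e' : rel T') (f : T -> T') (g : T' -> T) :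
  cancel f g -> cancel g f -> (forall u v, e' (f u) (f v) = e u v) ->
  forall x y phi, reflection e x y phi ->
  reflection e' (f x) (f y) (fun z => f (phi (g z))).
Proof.
move=> fK gK fe x y phi [[[bphi ephi] inv] pxy c3 c4 c5].
have gd := gdist_iso fK gK fe.
have Vs : forall a b c, Vside e' (f a) (f b) c = Vside e a b (g c).
  by move=> a b c; rewrite /Vside -{1 2}(gK c) !gd.
have Vm : forall a b c, Vmid e' (f a) (f b) c = Vmid e a b (g c).
  by move=> a b c; rewrite /Vmid -{1 2}(gK c) !gd.
split.
- split; last by move=> v; rewrite fK inv gK.
  split.
    apply: (@Bijective _ _ _ (fun z => f (phi (g z)))) => v; by rewrite fK inv gK.
  by move=> a b; rewrite fe ephi -fe !gK.
- by rewrite fK pxy.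
- move=> a; rewrite Vs => /c3 [h1 h2]; rewrite Vs fK h1; split => //.
  by rewrite -{1}(gK a) fe.
- move=> a b; rewrite !Vs => ha hb; rewrite -{1}(gK a) -{1}(gK b) fe => hab.
  by rewrite -(c4 _ _ ha hb hab) gK.
- by move=> v; rewrite Vm => /c5 ->; rewrite gK.
Qed.

Lemma walk_lift2 (T1 T2 : finType) (e1 : rel T1) (e2 : rel T2) n a b b' :
  walkn e2 n b b' -> walkn (cart_rel e1 e2) n (a, b) (a, b').
Proof.
elim: n b => [|n IH] b /=; first by move/eqP->.
case/existsP=> z /andP[h1 h2]; apply/existsP; exists (a, z).
by rewrite /cart_rel /= eqxx h1 IH.
Qed.

Lemma walk_comb (T1 T2 : finType) (e1 : rel T1) (e2 : rel T2) n1 n2 a a' b b' :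
  walkn e1 n1 a a' -> walkn e2 n2 b b' ->
  walkn (cart_rel e1 e2) (n1 + n2) (a, b) (a', b').
Proof.
move=> w1 w2; elim: n1 a w1 => [|n IH] a /=; first by move/eqP->; exact: walk_lift2.
case/existsP=> z /andP[h1 h2]; apply/existsP; exists (z, b).
by rewrite /cart_rel /= eqxx h1 orbT IH.
Qed.

Lemma walk_split (T1 T2 : finType) (e1 : rel T1) (e2 : rel T2) n p q :
  walkn (cart_rel e1 e2) n p q ->
  exists n1 n2, [/\ n1 + n2 = n, walkn e1 n1 p.1 q.1 & walkn e2 n2 p.2 q.2].
Proof.
elim: n p => [|n IH] p /=.
  by move/eqP->; exists 0, 0; split => //=; rewrite eqxx.
case/existsP=> z /andP[hz /IH [n1 [n2 [s w1 w2]]]].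
case/orP: hz => /andP[h1 h2].
  move/eqP: h1 => h1.
  exists n1, n2.+1; split; first by rewrite addnS s.
    by rewrite h1.
  by apply/existsP; exists z.2; apply/andP.
move/eqP: h2 => h2.
exists n1.+1, n2; split; first by rewrite addSn s.
  by apply/existsP; exists z.1; apply/andP.
by rewrite h2.
Qed.

Lemma gdist_prod (T1 T2 : finType) (e1 : rel T1) (e2 : rel T2) :
  connected_graph e1 -> connected_graph e2 ->
  forall p q, gdist (cart_rel e1 e2) p q = gdist e1 p.1 q.1 + gdist e2 p.2 q.2.
Proof.
move=> c1 c2 [a b] [a' b'] /=; apply: gdist_eq.
  apply: walk_comb; exact: conn_walk.
move=> m /walk_split [n1 [n2 [<- w1 w2]]].
by apply: leq_add; [case: (gdist_spec w1) | case: (gdist_spec w2)].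
Qed.

Lemma Vside_prod (T1 T2 : finType) (e1 : rel T1) (e2 : rel T2) :
  connected_graph e1 -> connected_graph e2 -> forall a a' b p,
  Vside (cart_rel e1 e2) (a, b) (a', b) p = Vside e1 a a' p.1.
Proof. by move=> c1 c2 a a' b p; rewrite /Vside !gdist_prod //= ltn_add2r. Qed.

Lemma Vmid_prod (T1 T2 : finType) (e1 : rel T1) (e2 : rel T2) :
  connected_graph e1 -> connected_graph e2 -> forall a a' b p,
  Vmid (cart_rel e1 e2) (a, b) (a', b) p = Vmid e1 a a' p.1.
Proof. by move=> c1 c2 a a' b p; rewrite /Vmid !gdist_prod //= eqn_add2r. Qed.

Lemma Vside_asym (T : finType) (e : rel T) a a' u :
  Vside e a a' u -> Vside e a' a u -> False.
Proof. by rewrite /Vside => h1 h2; have := ltn_trans h1 h2; rewrite ltnn. Qed.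

Lemma fwd1 (T1 T2 : finType) (e1 : rel T1) (e2 : rel T2) :
  connected_graph e1 -> connected_graph e2 -> forall a a' b phi,
  reflection e1 a a' phi ->
  reflection (cart_rel e1 e2) (a, b) (a', b) (fun p => (phi p.1, p.2)).
Proof.
move=> c1 c2 a a' b phi [[[bphi ephi] inv] pxy h3 h4 h5].
have Vs := Vside_prod c1 c2; have Vm := Vmid_prod c1 c2.
split.
- split; last by case=> u v /=; rewrite inv.
  split.
    by apply: (@Bijective _ _ _ (fun p => (phi p.1, p.2))); case=> u v /=; rewrite inv.
  case=> u v [u' v']; rewrite /cart_rel /= ephi (inj_eq (bij_inj bphi)) //.
- by rewrite /= pxy.
- case=> u v; rewrite !Vs /= => /h3 [-> he]; split => //.
  by rewrite /cart_rel /= he eqxx orbT.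
- case=> u v [u' v']; rewrite !Vs /= => hu hu'.
  rewrite /cart_rel /=; case/orP => /andP[h1 h2].
    by move/eqP: h1 hu' => <- /(Vside_asym hu).
  by move/eqP: h2 => <-; rewrite (h4 _ _ hu hu' h1).
- by case=> u v; rewrite Vm /= => /h5 ->.
Qed.

Lemma bwd1 (T1 T2 : finType) (e1 : rel T1) (e2 : rel T2) :
  irreflexive e2 -> connected_graph e1 -> connected_graph e2 -> forall a a' b Phi,
  reflection (cart_rel e1 e2) (a, b) (a', b) Phi ->
  exists phi, reflection e1 a a' phi.
Proof.
move=> irr c1 c2 a a' b Phi [[[bP eP] inv] pxy h3 h4 h5].
have Vs := Vside_prod c1 c2; have Vm := Vmid_prod c1 c2.
have pyx : Phi (a', b) = (a, b) by rewrite -pxy inv.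
have gd := gdist_iso inv inv eP.
have H : forall p, Vside e1 a a' p.1 -> (Phi p).2 = p.2.
  move=> p hp; have := hp; rewrite -(Vs a a' b p) => /h3 [].
  rewrite Vs => hq /orP [] /andP [h1 h2].
    by move/eqP: h1 hq => <- /(Vside_asym hp).
  by move/eqP: h2.
have snd : forall p, (Phi p).2 = p.2.
  move=> p; case: (ltngtP (gdist e1 p.1 a) (gdist e1 p.1 a')) => hp.
  - exact: H.
  - have : Vside e1 a a' (Phi p).1.
      rewrite -(Vs a a' b (Phi p)) /Vside -pyx -[X in _ < gdist _ _ X]pxy !gd.
      by rewrite !gdist_prod //= ltn_add2r.
    by move/H; rewrite inv.
  - have : Vmid e1 a a' p.1 by rewrite /Vmid hp.
    by rewrite -(Vm a a' b p) => /h5 ->.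
pose phi u := (Phi (u, b)).1.
have PE : forall u, Phi (u, b) = (phi u, b).
  by move=> u; rewrite [LHS]surjective_pairing snd.
have ee : forall u v, cart_rel e1 e2 (u, b) (v, b) = e1 u v.
  by move=> u v; rewrite /cart_rel /= irr andbF eqxx andbT.
exists phi; split.
- have iv : forall u, phi (phi u) = u by move=> u; rewrite /phi -PE inv.
  split => //; split; first by exists phi.
  by move=> u v; rewrite -ee -!PE eP ee.
- by rewrite /phi pxy.
- move=> u hu; have := hu; rewrite -(Vs a a' b (u, b)) => /h3.
  by rewrite PE Vs ee.
- move=> u w hu hw; rewrite -ee => he.
  have := h4 (u, b) (w, b); rewrite !Vs PE => /(_ hu hw he) [].
  by [].
- move=> u hu; have := hu; rewrite -(Vm a a' b (u, b)) => /h5.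
  by rewrite /phi => ->.
Qed.

Lemma swap_e (T1 T2 : finType) (e1 : rel T1) (e2 : rel T2) (u v : T1 * T2) :
  cart_rel e2 e1 (u.2, u.1) (v.2, v.1) = cart_rel e1 e2 u v.
Proof. by rewrite /cart_rel /= orbC andbC [X in _ || X]andbC. Qed.

Theorem lemma2p8 (T1 T2 : finType) (e1 : rel T1) (e2 : rel T2) :
  simple_graph e1 -> simple_graph e2 ->
  0 < #|T1| -> 0 < #|T2| ->
  connected_graph e1 -> connected_graph e2 ->
  (reflective e1 /\ reflective e2) <-> reflective (cart_rel e1 e2).
Proof.
move=> [s1 i1] [s2 i2] n1 n2 c1 c2.
have sK : forall (A B : finType), cancel (fun p : A * B => (p.2, p.1)) (fun p : B * A => (p.2, p.1)).
  by move=> A B [].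
split.
- case=> r1 r2 [a b] [a' b']; rewrite /cart_rel /= => /orP [] /andP [].
  + move/eqP => <- /r2 [phi hphi].
    have := fwd1 c2 c1 a hphi.
    move/(reflection_iso (sK _ _) (sK _ _) (@swap_e T2 T1 e2 e1)) => /= H.
    by eexists; exact: H.
  + move=> /r1 [phi hphi] /eqP <-.
    by eexists; exact: (fwd1 c1 c2 b hphi).
- move=> R; split.
  + move=> a a' h; case/card_gt0P: n2 => b _.
    have [|Phi HP] := R (a, b) (a', b); first by rewrite /cart_rel /= h eqxx orbT.
    exact (bwd1 i2 c1 c2 HP).
  + move=> b b' h; case/card_gt0P: n1 => a _.
    have [|Phi HP] := R (a, b) (a, b'); first by rewrite /cart_rel /= h eqxx.
    move: HP => /(reflection_iso (sK _ _) (sK _ _) (@swap_e T1 T2 e1 e2)) /= HP.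
    exact (bwd1 i1 c2 c1 HP).
Qed.
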